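(* Let $H$ and $\tilde H$ be two dephased $d\times d$ complex Hadamard matrices with $\tilde H=D_1P_1HP_2D_2$, where $D_1,D_2$ are diagonal unitary matrices and $P_1,P_2$ are permutation matrices. Let $\{C_1,C_2\}$ be an ER pair of columns of $H$, and let $\tilde C_1,\tilde C_2$ be the columns of $\tilde H$ into which the columns $C_1,C_2$ of $H$ are carried by this equivalence (i.e. by the column permutation $P_2$). Then $\{\tilde C_1,\tilde C_2\}$ is an ER pair of columns of $\tilde H$.
   Context: A $d\times d$ complex Hadamard matrix has unimodular entries and pairwise orthogonal columns; it is dephased if its first row and first column consist of $1$'s. Two distinct columns $C_A,C_B$ of a complex Hadamard matrix form an ER pair if $\overline{(C_A)_j}(C_B)_j\in\{1,-1\}$ for every $j=0,\dots,d-1$. *)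

(* Defs.v *)
(* Complex numbers are modelled as R[i] = complex R for R : realType
   (mathcomp-real-closed complex, a numClosedFieldType; conjugation is Num.conj). *)
From HB Require Import structures.
From mathcomp Require Import all_boot all_order all_algebra all_fingroup.
From mathcomp Require Import complex reals.
Set Implicit Arguments. Unset Strict Implicit. Unset Printing Implicit Defensive.
Import Order.TTheory GRing.Theory Num.Theory.
Local Open Scope ring_scope.

Section Defs.
Variable C : numClosedFieldType.
Variable d : nat.

Definition complex_hadamard (H : 'M[C]_d) : Prop :=
  (forall i j, `|H i j| = 1) /\
  (forall k l : 'I_d, k != l -> \sum_(j < d) (H j k)^* * H j l = 0).

Definition dephased (H : 'M[C]_d) : Prop :=
  (forall i j : 'I_d, nat_of_ord i = 0%N -> H i j = 1) /\
  (forall i j : 'I_d, nat_of_ord j = 0%N -> H i j = 1).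

Definition diag_unitary (D : 'M[C]_d) : Prop :=
  exists v : 'rV[C]_d, (forall j, `|v 0 j| = 1) /\ D = diag_mx v.

Definition ER_pair (H : 'M[C]_d) (a b : 'I_d) : Prop :=
  a != b /\ forall j : 'I_d, (H j a)^* * H j b = 1 \/ (H j a)^* * H j b = -1.
End Defs.

(* Main.v *)
Require Import Defs.
From HB Require Import structures.
From mathcomp Require Import all_boot all_order all_algebra all_fingroup.
From mathcomp Require Import complex reals.
From mathcomp Require Import ring.
Import Order.TTheory GRing.Theory Num.Theory.
Local Open Scope ring_scope.
Local Open Scope complex_scope.

Lemma entryE (C : numClosedFieldType) (d : nat) (H : 'M[C]_d) (u1 u2 : 'rV[C]_d)
   (s1 s2 : 'S_d) j k :
  (diag_mx u1 *m perm_mx s1 *m H *m perm_mx s2 *m diag_mx u2) j k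
  = u1 0 j * H (s1 j) (s2^-1 k)%g * u2 0 k.
Proof.
rewrite mul_mx_diag mxE -!mulmxA mul_diag_mx mxE -row_permE.
have -> : perm_mx s2 = perm_mx (s2^-1)^-1 by rewrite invgK.
by rewrite -col_permE !mxE.
Qed.

Lemma entryE2 (C : numClosedFieldType) (d : nat) (H : 'M[C]_d) (u1 u2 : 'rV[C]_d)
   (s1 s2 : 'S_d) j x :
  (diag_mx u1 *m perm_mx s1 *m H *m perm_mx s2 *m diag_mx u2) j (s2 x)
  = u1 0 j * H (s1 j) x * u2 0 (s2 x).
Proof. by rewrite entryE permK. Qed.

Lemma pm_mul (C : numClosedFieldType) (x y : C) :
  (x = 1 \/ x = -1) -> (y = 1 \/ y = -1) -> (x * y = 1 \/ x * y = -1).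
Proof. by case=> ->; case=> ->; rewrite ?mulr1 ?mul1r ?mulrNN ?mulr1; [left|right|right|left]. Qed.

Lemma pm1 (C : numClosedFieldType) (x : C) : (x = 1 \/ x = -1) -> x * x = 1.
Proof. by case=> ->; rewrite ?mulrNN mulr1. Qed.

Theorem proposition1 (R : realType) (d : nat) (H Ht D1 D2 : 'M[R[i]]_d)
    (s1 s2 : 'S_d) (a b : 'I_d) :
  complex_hadamard H -> dephased H ->
  complex_hadamard Ht -> dephased Ht ->
  diag_unitary D1 -> diag_unitary D2 ->
  Ht = D1 *m perm_mx s1 *m H *m perm_mx s2 *m D2 ->
  ER_pair H a b ->
  ER_pair Ht (s2 a) (s2 b).
Proof.
move=> _ _ _ [Hrow _] [u1 [Hu1 hD1]] [u2 [Hu2 hD2]] hHt [nab He]; subst Ht D1 D2.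
split; first by apply: contra nab => /eqP /perm_inj ->.
set c := (u2 0 (s2 a))^* * u2 0 (s2 b).
set e := fun j => (H j a)^* * H j b.
have key : forall j, ((diag_mx u1 *m perm_mx s1 *m H *m perm_mx s2 *m diag_mx u2) j (s2 a))^*
   * (diag_mx u1 *m perm_mx s1 *m H *m perm_mx s2 *m diag_mx u2) j (s2 b) = c * e (s1 j).
  move=> j; rewrite !entryE2 !rmorphM /=.
  have h := normCKC (u1 0 j); rewrite Hu1 expr1n in h.
  rewrite /c /e.
  transitivity (((u1 0 j)^* * u1 0 j) * ((u2 0 (s2 a))^* * u2 0 (s2 b)) * ((H (s1 j) a)^* * H (s1 j) b)); first by ring.
  by rewrite -h mul1r.
have z : (0 < d)%N := leq_ltn_trans (leq0n a) (ltn_ord a).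
set j0 := Ordinal z.
have h0 := key j0.
rewrite !Hrow // conjC1 mulr1 in h0.
have ec : c = e (s1 j0).
  have := @pm1 _ _ (He (s1 j0)); rewrite -/(e (s1 j0)) => ee.
  by rewrite -[c]mulr1 -ee mulrA -h0 mul1r.
move=> j; rewrite (key j); clearbody c; subst c; rewrite /e; case: (He (s1 j0)) => ->; case: (He (s1 j)) => ->; [left; exact: mulr1 | right; exact: mul1r | right; exact: mulr1 | left; by rewrite mulrNN mulr1].
Qed.
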